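(* Every conditional space $\mathfrak{X}=\langle X,\tau,T\rangle$ is isomorphic to the expanded Stone space $\langle\mathrm{Ul}(\mathrm{Clop}(\tau)),\tau_s,T_{\mathrm{Clop}(\tau)}\rangle$ of the conditional algebra $\langle\mathrm{Clop}(\tau),\to_T\rangle$, via the map $\varepsilon\colon X\to\mathrm{Ul}(\mathrm{Clop}(\tau))$, $\varepsilon(x)=\{U\in\mathrm{Clop}(\tau):x\in U\}$; that is, $\varepsilon$ is a homeomorphism and for all $x,y\in X$ and $Z\subseteq X$, $T(x,Z,y)$ iff $T_{\mathrm{Clop}(\tau)}(\varepsilon(x),\varepsilon[Z],\varepsilon(y))$.
   Context: A conditional space is a triple $\langle X,\tau,T\rangle$ where $\langle X,\tau\rangle$ is a Boolean (compact, Hausdorff, zero-dimensional) space and $T\subseteq X\times\mathcal{C}(\tau)\times X$ ($\mathcal{C}(\tau)$ the closed sets, $\mathrm{Clop}(\tau)$ the clopen sets) satisfies: (T1) for every $x$ and closed $Y$, $T(x,Y)=\{y:T(x,Y,y)\}$ is closed; (T2) for all clopen $U,V$, $U\to_T V=\{x:\text{for all closed } Z\subseteq U,\ T(x,Z)\subseteq V\}$ is clopen; (T3) for closed $Y$: $T(x,Y,y)$ iff $T(x,U,y)$ for all clopen $U\supseteq Y$. Then $\langle\mathrm{Clop}(\tau),\to_T\rangle$ is a conditional algebra. For a conditional algebra $\langle A,\to\rangle$ (Boolean algebra $A$ with $a\to1=1$, $(a\to b)\wedge(a\to c)=a\to(b\wedge c)$, $(a\vee b)\to c\le(a\to c)\wedge(b\to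 c)$): $\mathrm{Ul}(A)$ is its Stone space with topology $\tau_s$; filters include $A$ itself; $\varphi(F)=\{u:F\subseteq u\}$; $D^{\to}_u(F)=\{b:\exists a\in F,\ a\to b\in u\}$; and $T_A(u,Z,v)$ iff there is a filter $F$ with $Z=\varphi(F)$ and $D^{\to}_u(F)\subseteq v$. *)

(* Defs.v *)
From mathcomp Require Import all_boot all_order.
From mathcomp Require Import all_classical all_reals all_analysis.
Set Implicit Arguments. Unset Strict Implicit. Unset Printing Implicit Defensive.
Local Open Scope classical_set_scope.

Definition clopen_base (X : topologicalType) : Prop :=
  forall (O : set X) (x : X), open O -> O x ->
    exists U : set X, [/\ clopen U, U x & U `<=` O].

Definition boolean_space (X : topologicalType) : Prop :=
  [/\ compact [set: X], hausdorff_space X & clopen_base X].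

Definition Tsec (X : Type) (T : X -> set X -> X -> Prop) (x : X) (Y : set X)
  : set X := [set y | T x Y y].

Definition impT (X : topologicalType) (T : X -> set X -> X -> Prop)
  (U V : set X) : set X :=
  [set x | forall Z : set X, closed Z -> Z `<=` U -> Tsec T x Z `<=` V].

(* A conditional space <X, tau, T> ; T is a ternary relation on
   X x C(tau) x X, encoded as a predicate on X * set X * X which only
   holds for closed middle arguments. *)
Definition conditional_space (X : topologicalType)
  (T : X -> set X -> X -> Prop) : Prop :=
  [/\ boolean_space X,
      (forall x Y y, T x Y y -> closed Y),
      (forall x Y, closed Y -> closed (Tsec T x Y)),
      (forall U V, clopen U -> clopen V -> clopen (impT T U V)) &
      (forall x Y y, closed Y ->
                  (T x Y y <-> forall U, clopen U -> Y `<=` U -> T x U y))].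

(* Filters of Clop(tau) (the improper filter Clop(tau) itself included). *)
Definition clop_filter (X : topologicalType) (F : set (set X)) : Prop :=
  [/\ F `<=` clopen,
      F [set: X],
      (forall a b, F a -> F b -> F (a `&` b)) &
      (forall a b, F a -> clopen b -> a `<=` b -> F b)].

Definition clop_proper_filter (X : topologicalType) (F : set (set X)) : Prop :=
  clop_filter F /\ ~ F set0.

Definition clop_ultrafilter (X : topologicalType) (u : set (set X)) : Prop :=
  clop_proper_filter u /\
  (forall G, clop_proper_filter G -> u `<=` G -> G = u).

Definition phi (X : topologicalType) (F : set (set X)) : set (set (set X)) :=
  [set u | clop_ultrafilter u /\ F `<=` u].

Definition Dimp (X : topologicalType) (T : X -> set X -> X -> Prop)
  (u : set (set X)) (F : set (set X)) : set (set X) :=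
  [set b | clopen b /\ exists2 a, F a & u (impT T a b)].

Definition TA (X : topologicalType) (T : X -> set X -> X -> Prop)
  (u : set (set X)) (Z : set (set (set X))) (v : set (set X)) : Prop :=
  exists F : set (set X), [/\ clop_filter F, Z = phi F & Dimp T u F `<=` v].

(* Stone topology tau_s on Ul(Clop(tau)): generated by the basic sets
   {u in Ul : a in u}, a clopen. S is open iff S <= Ul and every point of S
   has a basic neighbourhood contained in S. *)
Definition stone_open (X : topologicalType) (S : set (set (set X))) : Prop :=
  S `<=` @clop_ultrafilter X /\
  forall u, S u -> exists2 a, u a /\ clopen a &
    [set v | clop_ultrafilter v /\ v a] `<=` S.

Definition eps (X : topologicalType) (x : X) : set (set X) :=
  [set U | clopen U /\ U x].

Definition stone_homeomorphism (X : topologicalType)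
  (f : X -> set (set X)) : Prop :=
  [/\ (forall x, clop_ultrafilter (f x)),
      injective f,
      (forall u, clop_ultrafilter u -> exists x, f x = u),
      (forall S, stone_open S -> open (f @^-1` S)) &
      (forall O : set X, open O -> stone_open (f @` O))].

(* Main.v *)
Require Import Defs.
From mathcomp Require Import all_boot all_order.
From mathcomp Require Import all_classical all_reals all_analysis.
Local Open Scope classical_set_scope.

Lemma Kcomp (X:topologicalType) (G : set (set X)) (K : set X) :
  compact [set: X] -> (forall a, G a -> closed a) -> closed K -> G setT ->
  (forall a b, G a -> G b -> exists2 c, G c & c `<=` a `&` b) ->
  (forall a, G a -> K `&` a !=set0) -> exists x, K x /\ forall a, G a -> a x.
Proof.
move=> cX Gcl Kcl GT Gdir Gne.
have FF : Filter (filter_from G (fun a => K `&` a)).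
  apply: filter_from_filter; first by exists setT.
  move=> i j Gi Gj; have [k Gk kij] := Gdir _ _ Gi Gj.
  by exists k => // x [Kx /kij [? ?]].
have PF := filter_from_proper FF Gne.
have [|x [_ clx]] := cX _ PF; first by exists setT => // x [].
have Hx : forall a, G a -> (K `&` a) x.
  move=> a Ga; apply: (closedI Kcl (Gcl _ Ga)) => B nB.
  by apply: clx => //; exists a.
exists x; split; first by case: (Hx _ GT).
by move=> a /Hx [].
Qed.
Arguments Kcomp {X G K}.

Lemma acc_clopen {X : topologicalType} (x y : X) : boolean_space X -> x <> y ->
  exists U, [/\ clopen U, U x & ~ U y].
Proof.
move=> [_ hX cb] xy.
have xy' : x != y by apply/eqP.
have [A [oA xA yA]] := hausdorff_accessible hX xy'.
move: xA yA; rewrite !inE => xA yA.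
have [U [cU Ux UA]] := cb A x oA xA.
by exists U; split => // /UA.
Qed.

Lemma sep {X : topologicalType} (C : set X) (y : X) : boolean_space X ->
  closed C -> ~ C y -> exists b, [/\ clopen b, C `<=` b & ~ b y].
Proof.
move=> bX Ccl Cy; have [cX _ _] := bX.
case: (pselect (forall a, [set a | clopen a /\ a y] a -> C `&` a !=set0)).
  move=> H; have [|||x [Cx Hx]] := Kcomp cX _ Ccl _ _ H.
  - by move=> a [[]].
  - by split => //; exact: clopenT.
  - by move=> a b [ca ay] [cb b_y]; exists (a `&` b) => //; split => //; exact: clopenI.
  have xy : y <> x by move=> e; apply: Cy; rewrite e.
  have [U [cU Uy Ux]] := acc_clopen _ _ bX xy.
  by exfalso; apply: Ux; apply: Hx.
move=> /existsNP [a /not_implyP [[ca ay] na]].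
exists (~` a); split => //; first exact: (@clopenC _ a a).
by move=> t Ct at'; apply: na; exists t.
Qed.

Lemma eps_ultra {X : topologicalType} (x : X) : clop_ultrafilter (eps x).
Proof.
split; first split; first split.
- by move=> U [].
- by split => //; exact: clopenT.
- by move=> a b [ca ax] [cb bx]; split; [exact: clopenI|].
- by move=> a b [ca ax] cb ab; split => //; exact: ab.
- by case.
move=> G [[Gcl GT GI Gup] G0] sub; apply/seteqP; split => // a Ga.
split; first exact: Gcl.
apply: contrapT => nax.
have Gc : G (~` a) by apply: sub; split => //; exact: (@clopenC _ a a (Gcl _ Ga)).
by apply: G0; rewrite -(setICr a); apply: GI.
Qed.

Lemma eps_surj {X : topologicalType} (u : set (set X)) : compact [set: X] ->
  clop_ultrafilter u -> exists x, eps x = u.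
Proof.
move=> cX [[[ucl uT uI uup] u0] umax].
have [||| x [_ Hx]] := Kcomp (K := setT) cX _ closedT uT.
- by move=> a /ucl [].
- by move=> a b ua ub; exists (a `&` b) => //; apply: uI.
- move=> a ua; rewrite setTI; apply/set0P/eqP => a0.
  by apply: u0; rewrite -a0.
exists x; apply: umax; first by case: (eps_ultra x).
by move=> a ua; split; [exact: ucl | exact: Hx].
Qed.

Lemma eps_inj {X : topologicalType} : boolean_space X -> injective (@eps X).
Proof.
move=> bX x y e; apply: contrapT => xy.
have [U [cU Ux Uy]] := acc_clopen _ _ bX xy.
have : eps x U by split.
by rewrite e => -[].
Qed.

Theorem theorem5p8 (X : topologicalType) (T : X -> set X -> X -> Prop) :
  conditional_space T ->
  stone_homeomorphism (@eps X) /\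
  (forall (x y : X) (Z : set X), T x Z y <-> TA T (eps x) (@eps X @` Z) (eps y)).
Proof.
move=> [bX Tcl T1 T2 T3].
have [cX hX cbX] := bX.
split.
  split.
  - exact: eps_ultra.
  - exact: eps_inj.
  - by move=> u /(eps_surj _ cX).
  - move=> S [Sul Sop]; rewrite openE => x Sx.
    have [a [ua ca] sub] := Sop _ Sx.
    apply: (@filterS _ _ _ a); last first.
      by apply: open_nbhs_nbhs; split; [case: ca | case: ua].
    move=> t at'; apply: sub; split; first exact: eps_ultra.
    by split.
  - move=> O oO; split; first by move=> _ [x _ <-]; exact: eps_ultra.
    move=> _ [x Ox <-].
    have [a [ca ax aO]] := cbX O x oO Ox.
    exists a; first by split => //; split.
    move=> v [uv va]; have [z ez] := eps_surj _ cX uv.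
    by exists z => //; apply: aO; move: va; rewrite -ez => -[].
have mono : forall x Y Y', closed Y -> closed Y' -> Y `<=` Y' ->
    Tsec T x Y `<=` Tsec T x Y'.
  move=> x0 Y Y' cY cY' YY' y0 /= Txy.
  apply/(T3 x0 Y' y0 cY') => U cU YU.
  by apply: (proj1 (T3 x0 Y y0 cY) Txy) => //; apply: subset_trans YU.
move=> x y Z; split.
  move=> Txy; have Zcl := Tcl _ _ _ Txy.
  exists [set U | clopen U /\ Z `<=` U]; split.
  - split.
    + by move=> U [].
    + by split => //; exact: clopenT.
    + move=> a b [ca Za] [cb Zb]; split; first exact: clopenI.
      by move=> t Zt; split; [exact: Za | exact: Zb].
    + by move=> a b [ca Za] cb ab; split => //; apply: subset_trans ab.
  - apply/seteqP; split.
      move=> _ [z Zz <-]; split; first exact: eps_ultra.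
      by move=> U [cU ZU]; split => //; exact: ZU.
    move=> u [uu Fu]; have [z ez] := eps_surj _ cX uu.
    exists z => //; apply: contrapT => nZz.
    have [b [cb Zb nbz]] := sep _ _ bX Zcl nZz.
    have : u b by apply: Fu.
    by rewrite -ez => -[].
  - move=> b [cb [a [ca Za] ha]]; split => //.
    by case: ha => _ xab; apply: (xab Z Zcl Za y Txy).
move=> [F [[Fcl FT FI Fup] Zphi Dsub]].
have i1 : forall z, Z z -> forall a, F a -> a z.
  move=> z Zz a Fa; have : phi F (eps z) by rewrite -Zphi; exists z.
  by move=> [_ /(_ a Fa) []].
have i2 : forall z, (forall a, F a -> a z) -> Z z.
  move=> z Hz; have : phi F (eps z).
    by split; [exact: eps_ultra | move=> a Fa; split; [exact: Fcl | exact: Hz]].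
  rewrite -Zphi => -[z' Zz' e]; by rewrite -(eps_inj bX _ _ e).
have Zcl : closed Z.
  have -> : Z = \bigcap_(a in F) a.
    apply/seteqP; split; first by move=> z Zz a Fa; exact: i1.
    by move=> z Hz; apply: i2 => a Fa; exact: Hz.
  by apply: closed_bigI => a /Fcl [].
apply/(T3 x Z y Zcl) => U cU ZU.
apply: contrapT => nT.
have [b [cb Tb nby]] := sep _ _ bX (T1 x U (proj2 cU)) nT.
have [a [Fa aU]] : exists a, F a /\ a `<=` U.
  case: (pselect (forall a, F a -> ~` U `&` a !=set0)).
    move=> H; have [|||w [Uw Hw]] := Kcomp cX _ _ FT _ H.
    - by move=> a /Fcl [].
    - by rewrite closedC; case: cU.
    - by move=> a b' Fa Fb; exists (a `&` b') => //; apply: FI.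
    by exfalso; apply: Uw; apply: ZU; apply: i2.
  move=> /existsNP [a /not_implyP [Fa na]]; exists a; split => //.
  by move=> t at'; apply: contrapT => nUt; apply: na; exists t.
have : eps y b.
  apply: Dsub; split => //; exists a => //; split.
    by apply: T2 => //; exact: Fcl.
  move=> Z' cZ' Z'a t /= Tt; apply: Tb.
  apply: (mono x Z' U cZ' (proj2 cU)) => //.
  by apply: subset_trans aU.
by case.
Qed.
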